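(* Let $X$ be a set, let $K,L$ be positive definite kernels on $X\times X$, and let $(\varphi,\mathscr{K})\in H_S(K)$ and $(\psi,\mathscr{L})\in H_S(L)$. Then $K\le L$ if and only if there exists a positive selfadjoint operator $B$ on $\mathscr{L}$ with $0\le B\le I$ such that $$K(x,y)=\langle\varphi(x),\varphi(y)\rangle_{\mathscr{K}}=\langle B^{1/2}\psi(x),B^{1/2}\psi(y)\rangle_{\mathscr{L}},\qquad x,y\in X.$$
   Context: A function $K:X\times X\to\mathbb{C}$ is positive definite (p.d.) if $\sum_{i,j=1}^n\overline{c_i}c_jK(x_i,x_j)\ge 0$ for all $n\in\mathbb{N}$, $x_i\in X$, $c_i\in\mathbb{C}$. For p.d. kernels $K,L$ on $X\times X$, $K\le L$ (Loewner order) means that $L-K$ is p.d. For a p.d. kernel $K$, $H_S(K)$ denotes the set of pairs $(\varphi,\mathscr{L})$ where $\mathscr{L}$ is a (separable) Hilbert space and $\varphi:X\to\mathscr{L}$ satisfies $K(x,y)=\langle\varphi(x),\varphi(y)\rangle_{\mathscr{L}}$ for all $x,y\in X$. *)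

(* Defs.v *)
From HB Require Import structures.
From mathcomp Require Import all_boot all_order all_algebra.
From mathcomp Require Import reals complex.
Set Implicit Arguments.
Unset Strict Implicit.
Unset Printing Implicit Defensive.
Import Order.TTheory GRing.Theory Num.Theory.
Local Open Scope ring_scope.
Local Open Scope complex_scope.

(* K : X x X -> C is positive definite:
   sum_{i,j} conj(c_i) c_j K(x_i,x_j) >= 0 (in the order of C, i.e. real
   and nonnegative) for all n, x_i, c_i. *)
Definition pd_kernel (R : realType) (X : Type) (K : X -> X -> R[i]) : Prop :=
  forall (n : nat) (x : 'I_n -> X) (c : 'I_n -> R[i]),
    0 <= \sum_(i < n) \sum_(j < n) ((c i)^* * c j * K (x i) (x j)).

Definition kernel_le (R : realType) (X : Type) (K L : X -> X -> R[i]) : Prop :=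
  pd_kernel (fun x y => L x y - K x y).

(* inner product: conjugate-linear in the first, linear in the second
   argument (consistent with the positive-definiteness convention above). *)
Record hilbert (R : realType) := Hilbert {
  hsort :> lmodType R[i];
  hinner : hsort -> hsort -> R[i];
  hinner_linear : forall (a : R[i]) (u v w : hsort),
      hinner u (a *: v + w) = a * hinner u v + hinner u w;
  hinner_conj : forall u v : hsort, hinner v u = (hinner u v)^*;
  hinner_ge0 : forall u : hsort, 0 <= hinner u u;
  hinner_eq0 : forall u : hsort, hinner u u = 0 -> u = 0;
  hcomplete : forall u : nat -> hsort,
      (forall e : R, 0 < e -> exists N : nat, forall m n : nat, (N <= m)%N -> (N <= n)%N ->
          Num.sqrt (complex.Re (hinner (u m - u n) (u m - u n))) < e) ->
      exists l : hsort, forall e : R, 0 < e -> exists N : nat, forall n : nat, (N <= n)%N ->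
          Num.sqrt (complex.Re (hinner (u n - l) (u n - l))) < e;
  hseparable : exists d : nat -> hsort, forall (v : hsort) (e : R), 0 < e ->
      exists n : nat, Num.sqrt (complex.Re (hinner (v - d n) (v - d n))) < e
}.

Arguments hinner {R} h _ _.


Section Operators.
Variables (R : realType) (H : hilbert R).

Definition hnorm (v : H) : R := Num.sqrt (complex.Re (hinner H v v)).

Definition bounded_op (B : H -> H) : Prop :=
  (forall (a : R[i]) (u v : H), B (a *: u + v) = a *: B u + B v) /\
  exists M : R, forall v : H, hnorm (B v) <= M * hnorm v.

Definition selfadjoint_op (B : H -> H) : Prop :=
  forall u v : H, hinner H (B u) v = hinner H u (B v).

Definition positive_op (B : H -> H) : Prop :=
  forall v : H, 0 <= hinner H v (B v).

Definition op_le (A B : H -> H) : Prop :=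
  forall v : H, hinner H v (A v) <= hinner H v (B v).

(* C is the positive square root B^{1/2} of B: C bounded, selfadjoint,
   positive, and C o C = B (such a C is unique for positive B). *)
Definition pos_sqrt_of (B C : H -> H) : Prop :=
  bounded_op C /\ selfadjoint_op C /\ positive_op C /\ (forall v, C (C v) = B v).

End Operators.

(* Main.v *)
Require Import Defs.
From HB Require Import structures.
From mathcomp Require Import all_boot all_order all_algebra.
From mathcomp Require Import reals complex.
From mathcomp Require Import classical_sets.
From mathcomp Require Import ring lra.
From Stdlib Require Import Classical ClassicalEpsilon.
Set Implicit Arguments.
Unset Strict Implicit.
Unset Printing Implicit Defensive.
Import Order.TTheory GRing.Theory Num.Theory.
Local Open Scope ring_scope.
Local Open Scope complex_scope.

Section Basic.
Variables (R : realType) (H : hilbert R).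
Local Notation ip := (hinner H).
Local Notation nrm := (@hnorm R H).
Definition n2 (v : H) : R := complex.Re (ip v v).
Definition cn (z : R[i]) : R := Normc.normc z.

Lemma ipDr (u v w : H) : ip u (v + w) = ip u v + ip u w.
Proof. by rewrite -[v in LHS]scale1r hinner_linear mul1r. Qed.
Lemma ip0r (u : H) : ip u 0 = 0.
Proof.
have h := ipDr u 0 0; rewrite addr0 in h.
by apply: (@addrI _ (ip u 0)); rewrite addr0 -h.
Qed.
Lemma ipZr (u : H) a (v : H) : ip u (a *: v) = a * ip u v.
Proof. by rewrite -[a *: v]addr0 hinner_linear ip0r addr0. Qed.
Lemma ipNr (u v : H) : ip u (- v) = - ip u v.
Proof. by rewrite -scaleN1r ipZr mulN1r. Qed.
Lemma ipBr (u v w : H) : ip u (v - w) = ip u v - ip u w.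
Proof. by rewrite ipDr ipNr. Qed.
Lemma ipDl (u v w : H) : ip (u + v) w = ip u w + ip v w.
Proof. by rewrite hinner_conj ipDr rmorphD /= -!hinner_conj. Qed.
Lemma ip0l (u : H) : ip 0 u = 0.
Proof. by rewrite hinner_conj ip0r conjc0. Qed.
Lemma ipZl a (u v : H) : ip (a *: u) v = conjc a * ip u v.
Proof. by rewrite hinner_conj ipZr rmorphM /= -hinner_conj. Qed.
Lemma ipNl (u v : H) : ip (- u) v = - ip u v.
Proof. by rewrite -scaleN1r ipZl rmorphN rmorph1 mulN1r. Qed.
Lemma ipBl (u v w : H) : ip (u - v) w = ip u w - ip v w.
Proof. by rewrite ipDl ipNl. Qed.

Lemma conj_real (z : R[i]) : conjc z = z -> z = (complex.Re z)%:C.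
Proof.
case: z => a b /= [] h.
have -> : b = 0 by lra.
by [].
Qed.

Lemma conjR (x : R) : conjc (x%:C) = x%:C.
Proof. by rewrite /= oppr0. Qed.

Lemma ip_real (v : H) : ip v v = (n2 v)%:C.
Proof. by apply: conj_real; rewrite -hinner_conj. Qed.

Lemma n2_ge0 (v : H) : 0 <= n2 v.
Proof. by have := hinner_ge0 v; rewrite ip_real lecR. Qed.

Lemma n2_eq0 (v : H) : n2 v = 0 -> v = 0.
Proof. by move=> h; apply: hinner_eq0; rewrite ip_real h. Qed.

Lemma nrm_ge0 (v : H) : 0 <= nrm v.
Proof. exact: sqrtr_ge0. Qed.

Lemma nrm_sq (v : H) : nrm v ^+ 2 = n2 v.
Proof. by rewrite /hnorm sqr_sqrtr // n2_ge0. Qed.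

Lemma nrm_eq0 (v : H) : nrm v = 0 -> v = 0.
Proof. by move=> h; apply: n2_eq0; rewrite -nrm_sq h expr0n. Qed.

Lemma nrm0 : nrm 0 = 0.
Proof. by rewrite /hnorm ip0r /= sqrtr0. Qed.

Lemma cn_sq (z : R[i]) : cn z ^+ 2 = complex.Re z ^+ 2 + complex.Im z ^+ 2.
Proof. by case: z => a b; rewrite /cn /= sqr_sqrtr // addr_ge0 // sqr_ge0. Qed.

Lemma cn_ge0 (z : R[i]) : 0 <= cn z.
Proof. by case: z => a b; rewrite /cn /= sqrtr_ge0. Qed.

Lemma cnM (z w : R[i]) : cn (z * w) = cn z * cn w.
Proof. exact: Normc.normcM. Qed.

Lemma cnD (z w : R[i]) : cn (z + w) <= cn z + cn w.
Proof. exact: le_normcD. Qed.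

Lemma cn_eq0 (z : R[i]) : cn z = 0 -> z = 0.
Proof. exact: Normc.eq0_normc. Qed.

Lemma Re_le_cn (z : R[i]) : complex.Re z <= cn z.
Proof.
have h : `|complex.Re z| <= cn z.
  by rewrite -(ler_pXn2r (n := 2)) // ?nnegrE ?cn_ge0 // cn_sq real_normK ?num_real // lerDl sqr_ge0.
exact: le_trans (ler_norm _) h.
Qed.

Lemma zJ (z : R[i]) : z * conjc z = (cn z ^+ 2)%:C.
Proof.
case: z => a b; rewrite cn_sq /=; simpc.
by congr Complex; ring.
Qed.

Lemma sq_le (x y : R) : 0 <= y -> x ^+ 2 <= y ^+ 2 -> x <= y.
Proof.
move=> y0 h; case: (lerP x 0) => [x0|x0]; first exact: le_trans x0 y0.
by rewrite -(ler_pXn2r (n := 2)) // nnegrE ltW.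
Qed.

Lemma CS (u v : H) : cn (ip u v) <= nrm u * nrm v.
Proof.
apply: sq_le; first by rewrite mulr_ge0 // nrm_ge0.
rewrite exprMn !nrm_sq.
have [u0|una] := eqVneq (n2 u) 0.
  by rewrite u0 mul0r (n2_eq0 u0) ip0l /cn Normc.normc0 expr0n.
have ua : 0 < n2 u by rewrite lt0r una n2_ge0.
set a := n2 u; set z := ip u v.
have := hinner_ge0 ((a%:C) *: v - z *: u).
rewrite !(ipBl, ipBr, ipZl, ipZr) (hinner_conj u v) -/z.
rewrite !ip_real -/a conjR.
have -> : (a%:C * (a%:C * (n2 v)%:C) - a%:C * (z * conjc z) -
   (conjc z * (a%:C * z) - conjc z * (z * a%:C))) = (a * (a * n2 v - cn z ^+ 2))%:C.
  rewrite zJ; rewrite -!rmorphM -!rmorphB /=.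
  have -> : conjc z * (a%:C * z) - conjc z * (z * a%:C) = 0 by ring.
  by rewrite subr0; congr _%:C; ring.
rewrite lecR pmulr_rge0 // subr_ge0 => h.
by [].
Qed.
End Basic.

Lemma cnJ (R : realType) (z : R[i]) : cn (conjc z) = cn z.
Proof. by case: z => a b; rewrite /cn /= sqrrN. Qed.
Lemma cnN (R : realType) (z : R[i]) : cn (- z) = cn z.
Proof. by case: z => a b; rewrite /cn /= !sqrrN. Qed.
Lemma cnR (R : realType) (x : R) : cn (x%:C) = `|x|.
Proof. by rewrite /cn /= expr0n /= addr0 sqrtr_sqr. Qed.
Lemma cnB (R : realType) (z w : R[i]) : cn (z - w) = cn (w - z).
Proof. by rewrite -cnN opprB. Qed.
Lemma cn_small (R : realType) (z : R[i]) : (forall e : R, 0 < e -> cn z <= e) -> z = 0.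
Proof.
move=> h; apply: cn_eq0; apply/eqP; rewrite eq_le cn_ge0 andbT.
by apply/ler_addgt0Pr => e e0; rewrite add0r h.
Qed.
Lemma small_le (R : realType) (x y : R) : (forall e : R, 0 < e -> x <= y + e) -> x <= y.
Proof. by move=> h; apply/ler_addgt0Pr. Qed.
Lemma archi_inv (R : realType) (e : R) : 0 < e -> exists N : nat, (N.+1%:R : R)^-1 < e.
Proof. by move=> e0; have [k] := ltr_add_invr e0; rewrite add0r; exists k. Qed.

Section Norms.
Variables (R : realType) (H : hilbert R).
Local Notation ip := (hinner H).
Local Notation nrm := (@hnorm R H).

Lemma n2D (u v : H) : n2 (u + v) = n2 u + n2 v + complex.Re (ip u v) + complex.Re (ip v u).
Proof. by rewrite /n2 !(ipDl, ipDr) !raddfD /=; ring. Qed.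

Lemma nrmD (u v : H) : nrm (u + v) <= nrm u + nrm v.
Proof.
apply: sq_le; first by rewrite addr_ge0 // nrm_ge0.
rewrite nrm_sq n2D sqrrD !nrm_sq.
have h1 := le_trans (Re_le_cn (ip u v)) (CS u v).
have h2 := le_trans (Re_le_cn (ip v u)) (CS v u).
lra.
Qed.

Lemma nrmZ a (v : H) : nrm (a *: v) = cn a * nrm v.
Proof.
rewrite /hnorm ipZl ipZr mulrA [conjc a * a]mulrC zJ ip_real -rmorphM /=.
by rewrite sqrtrM ?sqr_ge0 // sqrtr_sqr ger0_norm // cn_ge0.
Qed.

Lemma nrmN (v : H) : nrm (- v) = nrm v.
Proof. by rewrite -scaleN1r nrmZ cnN /cn Normc.normc1 mul1r. Qed.

Lemma nrmB (u v : H) : nrm (u - v) = nrm (v - u).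
Proof. by rewrite -nrmN opprB. Qed.

Lemma nrm_tri (u v w : H) : nrm (u - w) <= nrm (u - v) + nrm (v - w).
Proof. by have := nrmD (u - v) (v - w); rewrite addrA subrK. Qed.

Lemma n2_le (u v : H) : nrm u <= nrm v -> n2 u <= n2 v.
Proof. by move=> h; rewrite -!nrm_sq ler_pXn2r // nnegrE nrm_ge0. Qed.

Lemma le_n2 (u v : H) : n2 u <= n2 v -> nrm u <= nrm v.
Proof. by move=> h; apply: sq_le; rewrite ?nrm_ge0 // !nrm_sq. Qed.

Lemma CS_re (u v : H) : complex.Re (ip u v) <= nrm u * nrm v.
Proof. exact: le_trans (Re_le_cn _) (CS u v). Qed.

Definition lim_to (u : nat -> H) (l : H) :=
  forall e : R, 0 < e -> exists N : nat, forall n, (N <= n)%N -> nrm (u n - l) < e.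
Definition cauchy (u : nat -> H) :=
  forall e : R, 0 < e -> exists N : nat, forall m n, (N <= m)%N -> (N <= n)%N -> nrm (u m - u n) < e.

Lemma cauchy_lim u : cauchy u -> exists l, lim_to u l.
Proof. move=> h; exact: hcomplete. Qed.

Lemma lim_cauchy u l : lim_to u l -> cauchy u.
Proof.
move=> h e e0; have [N hN] := h (e / 2) (divr_gt0 e0 (ltr0Sn _ 1)).
exists N => m n hm hn; apply: le_lt_trans (nrm_tri _ (l) _) _.
rewrite (nrmB l); have := hN m hm; have := hN n hn; lra.
Qed.

Lemma lim_unique u l l' : lim_to u l -> lim_to u l' -> l = l'.
Proof.
move=> h h'; apply/eqP; rewrite -subr_eq0; apply/eqP/nrm_eq0/eqP.
rewrite eq_le nrm_ge0 andbT; apply: small_le => e e0.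
have [N hN] := h (e / 2) (divr_gt0 e0 (ltr0Sn _ 1)).
have [N' hN'] := h' (e / 2) (divr_gt0 e0 (ltr0Sn _ 1)).
have := hN (maxn N N') (leq_maxl _ _); have := hN' (maxn N N') (leq_maxr _ _).
have := nrm_tri l (u (maxn N N')) l'; rewrite (nrmB l (u _)); lra.
Qed.

Lemma lim_const l : lim_to (fun _ => l) l.
Proof. by move=> e e0; exists 0%N => n _; rewrite subrr nrm0. Qed.

Lemma lim_lin a u l w m : lim_to u l -> lim_to w m ->
  lim_to (fun n => a *: u n + w n) (a *: l + m).
Proof.
move=> h h' e e0.
have c0 : 0 < 2 * (cn a + 1) by rewrite mulr_gt0 // ltr_pwDr // cn_ge0.
have [N hN] := h (e / (2 * (cn a + 1))) (divr_gt0 e0 c0).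
have [N' hN'] := h' (e / 2) (divr_gt0 e0 (ltr0Sn _ 1)).
exists (maxn N N') => n hn.
have hn1 : (N <= n)%N by apply: leq_trans hn; exact: leq_maxl.
have hn2 : (N' <= n)%N by apply: leq_trans hn; exact: leq_maxr.
have -> : a *: u n + w n - (a *: l + m) = a *: (u n - l) + (w n - m).
  by rewrite scalerBr opprD addrACA.
apply: le_lt_trans (nrmD _ _) _; rewrite nrmZ.
have := hN n hn1; have := hN' n hn2 => h2 h1.
have h3 : cn a * nrm (u n - l) <= cn a * (e / (2 * (cn a + 1))).
  by rewrite ler_wpM2l ?cn_ge0 // ltW.
have h4 : cn a * (e / (2 * (cn a + 1))) <= e / 2.
  have h5 : cn a / (2 * (cn a + 1)) <= 2^-1.
    by rewrite ler_pdivrMr //; have := cn_ge0 a; lra.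
  by rewrite mulrCA; apply: ler_wpM2l => //; exact: ltW.
lra.
Qed.

Lemma lim_ext u w l : (forall n, u n = w n) -> lim_to u l -> lim_to w l.
Proof. by move=> e h e0 he; have [N hN] := h e0 he; exists N => n hn; rewrite -e hN. Qed.

Lemma lim_add u l w m : lim_to u l -> lim_to w m -> lim_to (fun n => u n + w n) (l + m).
Proof.
move=> h h' e e0; have [N hN] := lim_lin 1 h h' e0; exists N => n hn.
by have := hN n hn; rewrite !scale1r.
Qed.

Lemma lim_shift u l : lim_to u l -> lim_to (fun n => u n.+1) l.
Proof. by move=> h e e0; have [N hN] := h e e0; exists N => n hn; apply: hN; exact: leqW. Qed.

Lemma lim_ip0 m p w : lim_to m p -> (forall n, ip (m n) w = 0) -> ip p w = 0.
Proof.
move=> h h0; apply: cn_small => e e0.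
have c0 : 0 < nrm w + 1 by have := nrm_ge0 w; lra.
have [N hN] := h _ (divr_gt0 e0 c0).
have -> : ip p w = ip (p - m N) w by rewrite ipBl h0 subr0.
apply: le_trans (CS _ _) _; rewrite nrmB.
have h1 := hN N (leqnn N).
have : nrm (m N - p) * nrm w <= e / (nrm w + 1) * nrm w.
  by rewrite ler_wpM2r ?nrm_ge0 // ltW.
move/le_trans; apply.
rewrite -mulrA ger_pMr // mulrC ler_pdivrMr // mul1r; lra.
Qed.

Lemma lim_orth0 m q : lim_to m q -> (forall n, ip (m n) q = 0) -> q = 0.
Proof. by move=> h h0; apply: hinner_eq0; exact: lim_ip0 h h0. Qed.

Lemma lim_bound u l w c : lim_to u l -> (forall n, nrm (u n - w) <= c) -> nrm (l - w) <= c.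
Proof.
move=> h hc; apply: small_le => e e0.
have [N hN] := h e e0; have := hN N (leqnn N); have := hc N.
have := nrm_tri l (u N) w; rewrite (nrmB l (u N)); lra.
Qed.

End Norms.

Lemma inv_mono (R : realType) (N i : nat) : (N <= i)%N -> (i.+1%:R : R)^-1 <= (N.+1%:R)^-1.
Proof. by move=> h; rewrite lef_pV2 ?posrE ?ltr0Sn // ler_nat. Qed.

Lemma conjRM (R : realType) (x : R) (z : R[i]) : conjc (x%:C * z) = x%:C * conjc z.
Proof. by case: z => a b; simpc; congr Complex; ring. Qed.

Section Proj.
Variables (R : realType) (H : hilbert R).
Local Notation ip := (hinner H).
Local Notation nrm := (@hnorm R H).

Lemma parallelogram (a b : H) : n2 (a - b) + n2 (a + b) = 2 * n2 a + 2 * n2 b.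
Proof. rewrite /n2 !(ipDl, ipDr, ipNl, ipNr) opprK !(raddfD, raddfN) /=; ring. Qed.

Lemma n2Z2 (x : H) : n2 ((2%:R : R[i]) *: x) = 4 * n2 x.
Proof.
rewrite -!nrm_sq nrmZ exprMn.
have -> : cn (2%:R : R[i]) = 2 by rewrite -(rmorph_nat (real_complex R)) cnR ger0_norm.
by congr (_ * _); rewrite expr2; lra.
Qed.

Lemma orth_of_min (w x : H) :
  (forall t : R[i], n2 w <= n2 (w - t *: x)) -> ip x w = 0.
Proof.
move=> h; set z := ip x w.
set s : R := (n2 x + 1)^-1.
have s0 : 0 < s by rewrite invr_gt0; have := n2_ge0 x; lra.
have hs : s * n2 x < 1.
  by rewrite mulrC -/(n2 x / (n2 x + 1)) ltr_pdivrMr ?mul1r; have := n2_ge0 x; lra.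
have := h (s%:C * z).
rewrite /n2 !(ipBl, ipBr, ipZl, ipZr) (hinner_conj x w) -/z !ip_real conjRM.
have -> : complex.Re ((n2 w)%:C - s%:C * z * conjc z -
    (s%:C * conjc z * z - s%:C * conjc z * (s%:C * z * (n2 x)%:C)))
  = n2 w - 2 * s * cn z ^+ 2 + s * s * cn z ^+ 2 * n2 x.
  have zz : conjc z * z = (cn z ^+ 2)%:C by rewrite mulrC zJ.
  have e1 : s%:C * z * conjc z = (s * cn z ^+ 2)%:C.
    by transitivity (s%:C * (conjc z * z)); [ring | rewrite zz -rmorphM].
  have e2 : s%:C * conjc z * z = (s * cn z ^+ 2)%:C.
    by transitivity (s%:C * (conjc z * z)); [ring | rewrite zz -rmorphM].
  have e3 : s%:C * conjc z * (s%:C * z * (n2 x)%:C) = (s * s * cn z ^+ 2 * n2 x)%:C.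
    by transitivity (s%:C * s%:C * (conjc z * z) * (n2 x)%:C); [ring | rewrite zz -!rmorphM].
  rewrite e1 e2 e3 -!rmorphB /=; ring.
move=> h1.
have hc : s * cn z ^+ 2 * (s * n2 x - 2) >= 0 by lra.
have : cn z ^+ 2 <= 0.
  have neg : s * n2 x - 2 < 0 by lra.
  by move: hc; rewrite nmulr_lge0 // pmulr_rle0.
rewrite (le_eqVlt) ltNge sqr_ge0 orbF sqrf_eq0 => /eqP; exact: cn_eq0.
Qed.


Lemma two_neq0 : (2%:R : R[i]) != 0.
Proof. by rewrite pnatr_eq0. Qed.

Lemma sq_lt (x e : R) : 0 <= x -> 0 < e -> x ^+ 2 < e ^+ 2 -> x < e.
Proof. by move=> x0 e0; rewrite ltr_pXn2r // nnegrE ltW. Qed.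

Variables (M : H -> Prop) (M0 : M 0)
  (Mlin : forall (a : R[i]) (u w : H), M u -> M w -> M (a *: u + w)).

Theorem proj (v : H) : exists p : H,
  (exists m : nat -> H, (forall n, M (m n)) /\ lim_to m p) /\
  (forall x, M x -> ip x (v - p) = 0).
Proof.
pose E : set R := fun r => exists m, M m /\ r = nrm (v - m).
have hinf : has_inf E.
  split; first by exists (nrm (v - 0)); exists 0.
  by exists 0 => r [m [_ ->]]; exact: nrm_ge0.
pose d := inf E.
have dlb : forall m, M m -> d <= nrm (v - m).
  by move=> m hm; apply: (ge_inf hinf.2); exists m.
have d0 : 0 <= d.
  apply: lb_le_inf; first exact: hinf.1.
  by move=> r [m [_ ->]]; exact: nrm_ge0.
have approx : forall n : nat, exists m, M m /\ nrm (v - m) < d + n.+1%:R^-1.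
  move=> n; have hpos : 0 < (n.+1%:R : R)^-1 by rewrite invr_gt0 ltr0Sn.
  have [r [m [hm ->]] hr] := inf_adherent hpos hinf.
  by exists m.
have [ms hms] : exists ms : nat -> H, forall n, M (ms n) /\ nrm (v - ms n) < d + n.+1%:R^-1.
  exists (fun n => proj1_sig (constructive_indefinite_description _ (approx n))).
  move=> n; exact: proj2_sig (constructive_indefinite_description _ (approx n)).
have cau : cauchy ms.
  move=> e e0.
  have k0 : 0 < e ^+ 2 / (8 * d + 4) by rewrite divr_gt0 ?exprn_gt0 //; lra.
  have [N hN] := archi_inv k0.
  exists N => i j hi hj.
  set dl := (N.+1%:R : R)^-1 in hN.
  have dl0 : 0 < dl by rewrite invr_gt0 ltr0Sn.
  have dl1 : dl <= 1 by rewrite invf_le1 ?ltr0Sn // ler1n.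
  have hi' : nrm (v - ms i) < d + dl.
    by apply: lt_le_trans (hms i).2 _; rewrite lerD2l inv_mono.
  have hj' : nrm (v - ms j) < d + dl.
    by apply: lt_le_trans (hms j).2 _; rewrite lerD2l inv_mono.
  pose mid := 2^-1 *: ms i + 2^-1 *: ms j.
  have hmid : M mid.
    by have := Mlin (2^-1) (hms i).1 (Mlin (2^-1) (hms j).1 M0); rewrite addr0.
  have dm := dlb mid hmid.
  have par := parallelogram (v - ms i) (v - ms j).
  have e1 : v - ms i - (v - ms j) = - (ms i - ms j).
    by rewrite opprB addrC addrA subrK opprB.
  have e2 : v - ms i + (v - ms j) = (2%:R : R[i]) *: (v - mid).
    rewrite scalerBr /mid scalerDr !scalerA mulfV ?two_neq0 // !scale1r scaler_nat mulr2n.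
    by rewrite opprD addrACA.
  rewrite e1 e2 n2Z2 -!nrm_sq nrmN in par.
  apply: sq_lt; [exact: nrm_ge0 | exact: e0 | ].
  have a1 : d ^+ 2 <= nrm (v - mid) ^+ 2 by rewrite ler_pXn2r // nnegrE nrm_ge0.
  have a2 : nrm (v - ms i) ^+ 2 <= (d + dl) ^+ 2.
    by rewrite ler_pXn2r ?nnegrE ?nrm_ge0 ?ltW //; lra.
  have a3 : nrm (v - ms j) ^+ 2 <= (d + dl) ^+ 2.
    by rewrite ler_pXn2r ?nnegrE ?nrm_ge0 ?ltW //; lra.
  have a4 : (8 * d + 4) * dl < e ^+ 2.
    by rewrite mulrC -ltr_pdivlMr //; lra.
  have a5 : dl ^+ 2 <= dl by rewrite expr2 ger_pMr.
  have a6 : nrm (ms i - ms j) ^+ 2 <= 8 * d * dl + 4 * dl ^+ 2.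
    rewrite !expr2 in par a1 a2 a3 a5 *; nra.
  have a7 : 8 * d * dl + 4 * dl ^+ 2 <= (8 * d + 4) * dl by lra.
  lra.
have [p hp] := cauchy_lim cau.
exists p; split; first by exists ms; split => // n; exact: (hms n).1.
move=> x hx; apply: orth_of_min => t; apply: n2_le.
have b1 : nrm (v - p) <= d.
  apply: small_le => e e0.
  have [N1 hN1] := archi_inv (divr_gt0 e0 (ltr0Sn R 1)).
  have [N2 hN2] := hp _ (divr_gt0 e0 (ltr0Sn R 1)).
  have hn1 : (N1 <= maxn N1 N2)%N by exact: leq_maxl.
  have hn2 : (N2 <= maxn N1 N2)%N by exact: leq_maxr.
  have := hN2 _ hn2; have := (hms (maxn N1 N2)).2; have := inv_mono R hn1.
  have := nrm_tri v (ms (maxn N1 N2)) p.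
  move: hN1; set a := (N1.+1%:R : R)^-1; set b := ((maxn N1 N2).+1%:R : R)^-1; lra.
have b2 : d <= nrm (v - p - t *: x).
  apply: small_le => e e0.
  have [N hN] := hp e e0.
  have hm : M (t *: x + ms N) := Mlin t hx (hms N).1.
  have := dlb _ hm.
  have -> : v - (t *: x + ms N) = (v - p - t *: x) + (p - ms N).
    by rewrite opprD addrA [RHS]addrA (addrAC (v - p)) subrK.
  have := nrmD (v - p - t *: x) (p - ms N); have := hN N (leqnn N); rewrite (nrmB p); lra.
exact: le_trans b1 b2.
Qed.

End Proj.

Section Riesz.
Variables (R : realType) (H : hilbert R).
Local Notation ip := (hinner H).
Local Notation nrm := (@hnorm R H).

Theorem riesz (f : H -> R[i])
  (flin : forall (a : R[i]) (u v : H), f (a *: u + v) = a * f u + f v)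
  (c : R) (fb : forall v, cn (f v) <= c * nrm v) :
  exists w : H, forall v, f v = ip w v.
Proof.
have f0 : f 0 = 0.
  have := flin 1 0 0; rewrite scale1r addr0 mul1r => h.
  by apply: (@addrI _ (f 0)); rewrite addr0 -h.
have fB : forall u v, f (u - v) = f u - f v.
  by move=> u v; rewrite -scaleN1r addrC flin mulN1r addrC.
case: (classic (exists z, f z <> 0)) => [[z fz]|nz]; last first.
  exists 0 => v; rewrite ip0l.
  by apply: NNPP => hv; apply: nz; exists v.
pose M := fun x => f x = 0.
have M0 : M 0 by [].
have Mlin : forall (a : R[i]) (u w : H), M u -> M w -> M (a *: u + w).
  by move=> a u w; rewrite /M flin => -> ->; rewrite mulr0 addr0.
have [p [[m [hm hlim]] horth]] := proj M0 Mlin z.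
have fp : f p = 0.
  apply: cn_small => e e0.
  have c0 : 0 < `|c| + 1 by have := normr_ge0 c; lra.
  have [N hN] := hlim _ (divr_gt0 e0 c0).
  have -> : f p = f (p - m N) by rewrite fB (hm N) subr0.
  apply: le_trans (fb _) _.
  have h1 := hN N (leqnn N); rewrite nrmB in h1.
  have h2 : c * nrm (p - m N) <= `|c| * nrm (p - m N).
    by rewrite ler_wpM2r ?nrm_ge0 // ler_norm.
  apply: le_trans h2 _.
  have h3 : `|c| * nrm (p - m N) <= `|c| * (e / (`|c| + 1)).
    by rewrite ler_wpM2l // ltW.
  apply: le_trans h3 _.
  rewrite mulrCA ger_pMr // ler_pdivrMr // mul1r; lra.
pose u := z - p.
have fu : f u <> 0 by rewrite /u fB fp subr0.
have u0 : ip u u <> 0.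
  by move=> h; apply: fu; rewrite (hinner_eq0 h).
have key : forall v, ip u v = f v / f u * ip u u.
  move=> v.
  pose k := f v / f u.
  have hx : M (v - k *: u).
    by rewrite /M fB -[k *: u]addr0 flin f0 addr0 /k mulfVK //; [rewrite subrr | apply/eqP].
  have := horth _ hx; rewrite -/u ipBl ipZl => /eqP; rewrite subr_eq0 => /eqP h.
  rewrite hinner_conj h rmorphM /= conjcK ip_real conjR.
  by rewrite -/k.
exists (conjc (f u / ip u u) *: u) => v.
rewrite ipZl conjcK (key v).
by field; apply/andP; split; apply/eqP.
Qed.

End Riesz.

Section Lin.
Variables (R : realType) (H : hilbert R).
Local Notation ip := (hinner H).
Local Notation nrm := (@hnorm R H).

Definition linH (T : H -> H) := forall (a : R[i]) (u v : H), T (a *: u + v) = a *: T u + T v.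

Lemma lin0 T : linH T -> T 0 = 0.
Proof.
move=> h; have := h 1 0 0; rewrite !scale1r addr0 => e.
by apply: (@addrI _ (T 0)); rewrite addr0 -e.
Qed.
Lemma linD T : linH T -> forall u v, T (u + v) = T u + T v.
Proof. by move=> h u v; rewrite -[u in LHS]scale1r h scale1r. Qed.
Lemma linZ T : linH T -> forall a u, T (a *: u) = a *: T u.
Proof. by move=> h a u; rewrite -[a *: u]addr0 h lin0 // addr0. Qed.
Lemma linN T : linH T -> forall u, T (- u) = - T u.
Proof. by move=> h u; rewrite -scaleN1r linZ // scaleN1r. Qed.
Lemma linB T : linH T -> forall u v, T (u - v) = T u - T v.
Proof. by move=> h u v; rewrite linD // linN. Qed.

End Lin.

Section Sqrt.
Variables (R : realType) (H : hilbert R).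
Local Notation ip := (hinner H).
Local Notation nrm := (@hnorm R H).
Variables (S : H -> H) (Slin : linH S)
  (Ssa : forall u v, ip (S u) v = ip u (S v)) (Sb : forall v, nrm (S v) <= nrm v).

Definition hh : R[i] := (2^-1 : R)%:C.

Fixpoint Yk (k : nat) (v : H) : H :=
  match k with 0%N => 0 | k'.+1 => hh *: (S v + Yk k' (Yk k' v)) end.
Fixpoint qk (k : nat) : R :=
  match k with 0%N => 0 | k'.+1 => (1 + qk k' ^+ 2) / 2 end.

Lemma Yk_lin k : linH (Yk k).
Proof.
elim: k => [|k IH] a u v /=; first by rewrite scaler0 addr0.
rewrite Slin IH IH [in RHS]scalerA [a * hh]mulrC -[in RHS]scalerA -scalerDr.
by congr (_ *: _); rewrite scalerDr addrACA.


Qed.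

Lemma YS k v : Yk k (S v) = S (Yk k v).
Proof.
elim: k v => [|k IH] v /=; first by rewrite (lin0 Slin).
by rewrite !IH -(linD Slin) -(linZ Slin).
Qed.

Lemma YY k j v : Yk k (Yk j v) = Yk j (Yk k v).
Proof.
elim: k j v => [|k IH] j v /=; first by rewrite (lin0 (Yk_lin j)).
by rewrite -YS IH IH -(linD (Yk_lin j)) -(linZ (Yk_lin j)).
Qed.

Lemma conjhh : conjc hh = hh.
Proof. exact: conjR. Qed.

Lemma Ysa k u v : ip (Yk k u) v = ip u (Yk k v).
Proof.
elim: k u v => [|k IH] u v /=; first by rewrite ip0l ip0r.
by rewrite ipZl ipZr conjhh ipDl ipDr Ssa IH IH.
Qed.

Lemma cnhh : cn hh = 2^-1.
Proof. by rewrite /hh cnR ger0_norm // invr_ge0. Qed.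

Lemma qk_ge0 k : 0 <= qk k.
Proof.
elim: k => [|k IH] //=; apply: divr_ge0 => //; have := sqr_ge0 (qk k); lra.
Qed.

Lemma qk_le1 k : qk k <= 1.
Proof.
elim: k => [|k IH] //=; have := qk_ge0 k => h0.
rewrite ler_pdivrMr //; rewrite expr2; nra.
Qed.

Lemma qk_incr k : qk k <= qk k.+1.
Proof.
rewrite /= ler_pdivlMr // expr2; have := qk_ge0 k; have := qk_le1 k; nra.
Qed.

Lemma Ybd k v : nrm (Yk k v) <= qk k * nrm v.
Proof.
elim: k v => [|k IH] v /=; first by rewrite nrm0 mul0r.
rewrite nrmZ cnhh.
have h1 := nrmD (S v) (Yk k (Yk k v)).
have h2 := IH (Yk k v).
have h3 := IH v.
have h4 : qk k * nrm (Yk k v) <= qk k * (qk k * nrm v) by rewrite ler_wpM2l // qk_ge0.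
have := Sb v; have := nrm_ge0 v.
move=> hv hSv.
have hh1 : nrm (S v + Yk k (Yk k v)) <= nrm v + qk k * qk k * nrm v by lra.
have -> : (1 + qk k ^+ 2) / 2 * nrm v = 2^-1 * (nrm v + qk k * qk k * nrm v) by ring.
by rewrite ler_wpM2l // invr_ge0.
Qed.

Lemma Ydiff k v : nrm (Yk k.+1 v - Yk k v) <= (qk k.+1 - qk k) * nrm v.
Proof.
elim: k v => [|k IH] v.
  rewrite /= addr0 subr0 nrmZ cnhh.
  have -> : (1 + 0 ^+ 2) / 2 - 0 = (2^-1 : R) by rewrite expr0n /= addr0 subr0 mul1r.
  by rewrite ler_wpM2l // invr_ge0.
set D := Yk k.+1 v - Yk k v.
have e1 : Yk k.+2 v - Yk k.+1 v = hh *: (Yk k.+1 D + Yk k D).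
  rewrite /D !(linB (Yk_lin _)) (YY k k.+1).
  rewrite [Yk k.+2 v]/= [Yk k.+1 v in X in _ - X]/= -scalerBr.
  congr (_ *: _).
  rewrite opprD addrACA subrr add0r.
  by rewrite addrA subrK.
rewrite e1 nrmZ cnhh.
have h1 := nrmD (Yk k.+1 D) (Yk k D).
have h2 := Ybd k.+1 D.
have h3 := Ybd k D.
have h4 := IH v.
have q0 := qk_ge0 k; have q1 := qk_ge0 k.+1.
have hD := nrm_ge0 D.
have h5 : (qk k.+1 + qk k) * nrm D <= (qk k.+1 + qk k) * ((qk k.+1 - qk k) * nrm v).
  by rewrite ler_wpM2l // addr_ge0.
have -> : qk k.+2 - qk k.+1 = 2^-1 * ((qk k.+1 + qk k) * (qk k.+1 - qk k)).
  by rewrite /=; ring.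
rewrite -mulrA ler_wpM2l ?invr_ge0 //.
lra.
Qed.

Lemma Ytel k m v : nrm (Yk (k + m) v - Yk k v) <= (qk (k + m) - qk k) * nrm v.
Proof.
elim: m => [|m IH]; first by rewrite addn0 !subrr nrm0 mul0r.
rewrite addnS.
have := nrm_tri (Yk (k + m).+1 v) (Yk (k + m) v) (Yk k v).
have := Ydiff (k + m) v.
have := nrm_ge0 v => h0 h1 h2.
have -> : (qk (k + m).+1 - qk k) * nrm v = (qk (k + m).+1 - qk (k + m)) * nrm v + (qk (k + m) - qk k) * nrm v by ring.
lra.
Qed.

Lemma qk_rate k : (k.+2%:R : R) * (1 - qk k) <= 2.
Proof.
elim: k => [|k IH]; first by rewrite /= subr0 mulr1.
have q0 := qk_ge0 k; have q1 := qk_le1 k.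
rewrite -[k.+3]addn1 natrD.
set x := (k.+2%:R : R) in IH *.
have x2 : 2 <= x by rewrite /x ler_nat.
have -> : 1 - qk k.+1 = (1 - qk k) - (1 - qk k) ^+ 2 / 2.
  by rewrite /=; field.
set e := 1 - qk k in IH *.
have e0 : 0 <= e by rewrite /e; lra.
have e1 : e <= 1 by rewrite /e; lra.
rewrite expr2 /=. nra.
Qed.

Lemma qk_lim (e : R) : 0 < e -> exists N, 1 - qk N < e.
Proof.
move=> e0; have [N hN] := archi_inv (divr_gt0 e0 (ltr0Sn R 1)).
exists N; have := qk_rate N.
have hp : 0 < (N.+2%:R : R) by rewrite ltr0Sn.
have hp1 : (N.+1%:R : R) <= N.+2%:R by rewrite ler_nat.
move: hN; set a := (N.+1%:R : R)^-1 => hN h.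
have ha : a * N.+1%:R = 1 by rewrite /a mulVf // pnatr_eq0.
have : 1 - qk N <= 2 * a.
  have h' : (1 - qk N) * N.+1%:R <= 2 * a * N.+1%:R.
    rewrite -mulrA ha mulr1; apply: le_trans h; rewrite mulrC ler_wpM2r //.
    by have := qk_le1 N; lra.
  by move: h'; rewrite ler_pM2r // ltr0Sn.
lra.
Qed.

Lemma Ycauchy v : cauchy (fun k => Yk k v).
Proof.
move=> e e0.
have c0 : 0 < 2 * (nrm v + 1) by have := nrm_ge0 v; lra.
have [N hN] := qk_lim (divr_gt0 e0 c0).
exists N => m n hm hn.
have b : forall j, (N <= j)%N -> nrm (Yk j v - Yk N v) <= (1 - qk N) * nrm v.
  move=> j hj; rewrite -(subnKC hj); apply: le_trans (Ytel N (j - N) v) _.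
  by rewrite ler_wpM2r ?nrm_ge0 // lerD2r qk_le1.
apply: le_lt_trans (nrm_tri _ (Yk N v) _) _.
have := b m hm; have := b n hn; rewrite (nrmB (Yk N v)).
have qn : 0 <= 1 - qk N by have := qk_le1 N; lra.
have h1 : (1 - qk N) * (nrm v + 1) < e / (2 * (nrm v + 1)) * (nrm v + 1).
  by rewrite ltr_pM2r //; have := nrm_ge0 v; lra.
have h1' : (1 - qk N) * nrm v <= (1 - qk N) * (nrm v + 1).
  by rewrite ler_wpM2l //; lra.
have h2 : e / (2 * (nrm v + 1)) * (nrm v + 1) = e / 2.
  by field; have := nrm_ge0 v; lra.
rewrite h2 in h1.
move: h1 h1'; set A := (1 - qk N) * (nrm v + 1); set B := (1 - qk N) * nrm v.
lra.
Qed.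

Lemma Yex v : exists l, lim_to (fun k => Yk k v) l.
Proof. exact: cauchy_lim (Ycauchy v). Qed.

Definition Yinf (v : H) : H := proj1_sig (constructive_indefinite_description _ (Yex v)).
Lemma YinfP v : lim_to (fun k => Yk k v) (Yinf v).
Proof. exact: proj2_sig (constructive_indefinite_description _ (Yex v)). Qed.

Lemma Yinf_lin : linH Yinf.
Proof.
move=> a u w; apply: lim_unique (YinfP _) _.
by apply: lim_ext (lim_lin a (YinfP u) (YinfP w)) => n; rewrite (Yk_lin n).
Qed.

Lemma Yinf_bd v : nrm (Yinf v) <= nrm v.
Proof.
have := @lim_bound _ _ _ _ 0 (nrm v) (YinfP v); rewrite subr0; apply => n.
rewrite subr0; apply: le_trans (Ybd n v) _.
by rewrite ler_piMl ?nrm_ge0 ?qk_le1.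
Qed.

Lemma Yinf_sa u v : ip (Yinf u) v = ip u (Yinf v).
Proof.
apply/eqP; rewrite -subr_eq0; apply/eqP; apply: cn_small => e e0.
have c0 : 0 < nrm u + nrm v + 1 by have := nrm_ge0 u; have := nrm_ge0 v; lra.
set dl := e / (nrm u + nrm v + 1).
have dl0 : 0 < dl by rewrite divr_gt0.
have [N1 hN1] := YinfP u dl0.
have [N2 hN2] := YinfP v dl0.
set k := maxn N1 N2.
have h1 := hN1 k (leq_maxl _ _); have h2 := hN2 k (leq_maxr _ _).
have -> : ip (Yinf u) v - ip u (Yinf v) = ip (Yinf u - Yk k u) v - ip u (Yinf v - Yk k v).
  by rewrite ipBl ipBr Ysa; ring.
apply: le_trans (cnD _ _) _; rewrite cnN.
have c1 := CS (Yinf u - Yk k u) v; have c2 := CS u (Yinf v - Yk k v).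
rewrite nrmB in c1; rewrite nrmB in c2.
have d1 : nrm (Yk k u - Yinf u) * nrm v <= dl * nrm v by rewrite ler_wpM2r ?nrm_ge0 ?ltW.
have d2 : nrm u * nrm (Yk k v - Yinf v) <= nrm u * dl by rewrite ler_wpM2l ?nrm_ge0 ?ltW.
have d3 : dl * nrm v + nrm u * dl <= e.
  have -> : dl * nrm v + nrm u * dl = e * ((nrm u + nrm v) / (nrm u + nrm v + 1)).
    by rewrite /dl; ring.
  by rewrite ger_pMr // ler_pdivrMr // mul1r; lra.
move: c1 c2 d1 d2 d3.
set A := cn _; set B := cn _; set C1 := _ * nrm v; set C2 := nrm u * _.
set D1 := dl * nrm v; set D2 := nrm u * dl; lra.
Qed.

Lemma YY_lim v : lim_to (fun k => Yk k (Yk k v)) (Yinf (Yinf v)).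
Proof.
move=> e e0.
have [N1 hN1] := YinfP v (divr_gt0 e0 (ltr0Sn R 1)).
have [N2 hN2] := YinfP (Yinf v) (divr_gt0 e0 (ltr0Sn R 1)).
exists (maxn N1 N2) => n hn.
have hn1 : (N1 <= n)%N by apply: leq_trans hn; exact: leq_maxl.
have hn2 : (N2 <= n)%N by apply: leq_trans hn; exact: leq_maxr.
have -> : Yk n (Yk n v) - Yinf (Yinf v) =
   Yk n (Yk n v - Yinf v) + (Yk n (Yinf v) - Yinf (Yinf v)).
  by rewrite (linB (Yk_lin n)) addrA subrK.
apply: le_lt_trans (nrmD _ _) _.
have b1 := Ybd n (Yk n v - Yinf v).
have b2 : qk n * nrm (Yk n v - Yinf v) <= nrm (Yk n v - Yinf v).
  by rewrite ler_piMl ?nrm_ge0 ?qk_le1.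
have := hN1 n hn1; have := hN2 n hn2.
move: b1 b2; set A := nrm _; set B := qk n * _; set C1 := nrm (Yk n v - _).
set D := nrm (Yk n (Yinf v) - _); lra.
Qed.

Lemma Yinf_half v : Yinf v = hh *: (S v + Yinf (Yinf v)).
Proof.
apply: lim_unique (lim_shift (YinfP v)) _.
have := lim_lin hh (lim_lin 1 (lim_const (S v)) (YY_lim v)) (lim_const 0).
rewrite addr0 scale1r; apply: lim_ext => n.
by rewrite addr0.
Qed.

Lemma Yinf_fix v : Yinf v + Yinf v = S v + Yinf (Yinf v).
Proof.
rewrite -mulr2n -scaler_nat {1}Yinf_half scalerA.
have -> : (2%:R : R[i]) * hh = 1.
  by rewrite /hh -(rmorph_nat (real_complex R) 2) -rmorphM mulfV ?pnatr_eq0.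

by rewrite scale1r.
Qed.

Theorem sqrt_op : exists C : H -> H,
  [/\ bounded_op C, selfadjoint_op C, positive_op C & forall v, C (C v) = v - S v].
Proof.
exists (fun v => v - Yinf v); split.
- split.
    move=> a u w; rewrite Yinf_lin scalerBr opprD addrACA //.
  exists 2 => v; apply: le_trans (nrmD _ _) _; rewrite nrmN.
  by have := Yinf_bd v; lra.
- by move=> u v; rewrite ipBl ipBr Yinf_sa.
- move=> v; rewrite ipBr.
  have hr : ip v (Yinf v) = (complex.Re (ip v (Yinf v)))%:C.
    by apply: conj_real; rewrite -hinner_conj Yinf_sa.
  rewrite hr ip_real -rmorphB lecR subr_ge0.
  apply: le_trans (CS_re _ _) _.
  rewrite -nrm_sq expr2 ler_wpM2l ?nrm_ge0 //; exact: Yinf_bd.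
- move=> v; rewrite (linB Yinf_lin).
  have g : Yinf (Yinf v) = Yinf v + Yinf v - S v by rewrite Yinf_fix addrC addKr.
  rewrite g opprB (addrAC (Yinf v + Yinf v)) addrK addrA subrK //.
Qed.

End Sqrt.

Section Sums.
Variables (R : realType) (H : hilbert R).
Local Notation ip := (hinner H).
Local Notation nrm := (@hnorm R H).

Lemma ip_sumr (I : Type) (r : seq I) (F : I -> H) (u : H) :
  ip u (\sum_(i <- r) F i) = \sum_(i <- r) ip u (F i).
Proof. exact: (big_morph (ip u) (ipDr u) (ip0r u)). Qed.

Lemma ip_suml (I : Type) (r : seq I) (F : I -> H) (u : H) :
  ip (\sum_(i <- r) F i) u = \sum_(i <- r) ip (F i) u.
Proof. exact: (big_morph (ip^~ u) (fun a b => ipDl a b u) (ip0l u)). Qed.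

Lemma lin_sum (T : H -> H) (I : Type) (r : seq I) (F : I -> H) : linH T ->
  T (\sum_(i <- r) F i) = \sum_(i <- r) T (F i).
Proof. move=> h; exact: (big_morph T (linD h) (lin0 h)). Qed.

Lemma ip_comb (n : nat) (a : 'I_n -> R[i]) (u : 'I_n -> H) (w : 'I_n -> H) :
  ip (\sum_(i < n) a i *: u i) (\sum_(j < n) a j *: w j) =
  \sum_(i < n) \sum_(j < n) (conjc (a i) * a j * ip (u i) (w j)).
Proof.
rewrite ip_suml; apply: eq_bigr => i _.
rewrite ip_sumr; apply: eq_bigr => j _.
by rewrite ipZl ipZr mulrA.
Qed.

Lemma nrm_le_comb (s t : H) : n2 s <= n2 t -> nrm s <= nrm t.
Proof. exact: le_n2. Qed.

End Sums.

Section Transfer.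
Variables (R : realType) (H1 H2 : hilbert R).
Lemma lim_transfer (a b : nat -> H1) (p : H1) (c d : nat -> H2) (g : H2) :
  lim_to a p -> lim_to b p -> lim_to c g ->
  (forall n, hnorm (d n - c n) <= hnorm (b n - a n)) -> lim_to d g.
Proof.
move=> ha hb hc hdc e e0.
have e3 : 0 < e / 3 by rewrite divr_gt0.
have [N1 h1] := ha _ e3; have [N2 h2] := hb _ e3; have [N3 h3] := hc _ e3.
exists (maxn N1 (maxn N2 N3)) => n hn.
have hn1 : (N1 <= n)%N by apply: leq_trans hn; exact: leq_maxl.
have hn23 : (maxn N2 N3 <= n)%N by apply: leq_trans hn; exact: leq_maxr.
have hn2 : (N2 <= n)%N by apply: leq_trans hn23; exact: leq_maxl.
have hn3 : (N3 <= n)%N by apply: leq_trans hn23; exact: leq_maxr.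
have := h1 n hn1; have := h2 n hn2; have := h3 n hn3; have := hdc n.
have := nrm_tri (d n) (c n) g; have := nrm_tri (b n) p (a n).
rewrite (nrmB p (a n)).
set A := hnorm (a n - p); set B := hnorm (b n - p); set C := hnorm (c n - g).
set D := hnorm (d n - c n); set E := hnorm (b n - a n); set F := hnorm (d n - g).
lra.
Qed.
End Transfer.

Lemma numconjE (R : realType) (z : R[i]) : Num.conj z = conjc z.
Proof. by []. Qed.

Lemma le_n2x (R : realType) (H1 H2 : hilbert R) (u : H1) (v : H2) :
  n2 u <= n2 v -> hnorm u <= hnorm v.
Proof. by move=> h; apply: sq_le; rewrite ?nrm_ge0 // !nrm_sq. Qed.

Lemma n2_lex (R : realType) (H1 H2 : hilbert R) (u : H1) (v : H2) :
  hnorm u <= hnorm v -> n2 u <= n2 v.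
Proof. by move=> h; rewrite -!nrm_sq ler_pXn2r // nnegrE nrm_ge0. Qed.

Section Kernel.
Variables (R : realType) (X : Type) (K L : X -> X -> R[i]) (HKs HLs : hilbert R)
  (phi : X -> HKs) (psi : X -> HLs)
  (Hphi : forall x y, K x y = hinner HKs (phi x) (phi y))
  (Hpsi : forall x y, L x y = hinner HLs (psi x) (psi y))
  (kle : kernel_le K L).
Local Notation ipK := (hinner HKs).
Local Notation ipL := (hinner HLs).

Definition cpsi (s : seq (R[i] * X)) : HLs := \sum_(q <- s) q.1 *: psi q.2.
Definition cphi (s : seq (R[i] * X)) : HKs := \sum_(q <- s) q.1 *: phi q.2.

Lemma comb_tnth (H : hilbert R) (f : X -> H) (s : seq (R[i] * X)) :
  \sum_(q <- s) q.1 *: f q.2 =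
  \sum_(i < size s) (tnth (in_tuple s) i).1 *: f (tnth (in_tuple s) i).2.
Proof. exact: big_tnth. Qed.

Lemma key s : n2 (cphi s) <= n2 (cpsi s).
Proof.
rewrite /n2 /cphi /cpsi !comb_tnth !ip_comb.
set c := fun i => (tnth (in_tuple s) i).1.
set x := fun i => (tnth (in_tuple s) i).2.
have h := kle x c.
have eq : \sum_(i < size s) \sum_(j < size s) (Num.conj (c i) * c j * (L (x i) (x j) - K (x i) (x j)))
   = \sum_(i < size s) \sum_(j < size s) (conjc (c i) * c j * ipL (psi (x i)) (psi (x j)))
   - \sum_(i < size s) \sum_(j < size s) (conjc (c i) * c j * ipK (phi (x i)) (phi (x j))).
  rewrite -sumrB; apply: eq_bigr => i _; rewrite -sumrB; apply: eq_bigr => j _.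
  by rewrite Hphi Hpsi numconjE; ring.
rewrite eq subr_ge0 lecE in h.
by case/andP: h.
Qed.

Lemma cpsi_cat s t : cpsi (s ++ t) = cpsi s + cpsi t.
Proof. by rewrite /cpsi big_cat. Qed.
Lemma cphi_cat s t : cphi (s ++ t) = cphi s + cphi t.
Proof. by rewrite /cphi big_cat. Qed.
Definition scl (a : R[i]) (s : seq (R[i] * X)) := [seq (a * q.1, q.2) | q <- s].
Lemma cpsi_scl a s : cpsi (scl a s) = a *: cpsi s.
Proof. by rewrite /cpsi big_map scaler_sumr; apply: eq_bigr => q _; rewrite scalerA. Qed.
Lemma cphi_scl a s : cphi (scl a s) = a *: cphi s.
Proof. by rewrite /cphi big_map scaler_sumr; apply: eq_bigr => q _; rewrite scalerA. Qed.
Lemma cpsi_nil : cpsi [::] = 0. Proof. by rewrite /cpsi big_nil. Qed.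

Lemma lip s t : hnorm (cphi s - cphi t) <= hnorm (cpsi s - cpsi t).
Proof.
apply: le_n2x; have := key (s ++ scl (-1) t).
by rewrite cphi_cat cpsi_cat cphi_scl cpsi_scl !scaleN1r.
Qed.

Lemma nrm_key s : hnorm (cphi s) <= hnorm (cpsi s).
Proof. exact: le_n2x (key s). Qed.

Definition Msp (v : HLs) := exists s, v = cpsi s.
Lemma Msp0 : Msp 0. Proof. by exists [::]; rewrite cpsi_nil. Qed.
Lemma Msplin (a : R[i]) (u w : HLs) : Msp u -> Msp w -> Msp (a *: u + w).
Proof. by move=> [s ->] [t ->]; exists (scl a s ++ t); rewrite cpsi_cat cpsi_scl. Qed.

Definition Grel (u : HLs) (g : HKs) := exists (p : HLs) (sq : nat -> seq (R[i] * X)),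
  [/\ lim_to (fun n => cpsi (sq n)) p, (forall s, ipL (cpsi s) (u - p) = 0) &
      lim_to (fun n => cphi (sq n)) g].

Lemma Gex u : exists g, Grel u g.
Proof.
have [p [[m [hm hlim]] horth]] := proj Msp0 Msplin u.
have [sq hsq] : exists sq : nat -> seq (R[i] * X), forall n, m n = cpsi (sq n).
  exists (fun n => proj1_sig (constructive_indefinite_description _ (hm n))).
  move=> n; exact: proj2_sig (constructive_indefinite_description _ (hm n)).
have l1 : lim_to (fun n => cpsi (sq n)) p by exact: (lim_ext hsq hlim).
have c1 := lim_cauchy l1.
have c2 : cauchy (fun n => cphi (sq n)).
  move=> e e0; have [N hN] := c1 e e0; exists N => i j hi hj.
  exact: le_lt_trans (lip _ _) (hN i j hi hj).
have [g hg] := cauchy_lim c2.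
exists g, p, sq; split => // s; apply: horth; by exists s.
Qed.

Lemma Guniq u g g' : Grel u g -> Grel u g' -> g = g'.
Proof.
move=> [p [sq [l1 o1 l2]]] [p' [sq' [l1' o1' l2']]].
have pp : (-1) *: p' + p = 0.
  apply: (@lim_orth0 _ _ (fun n => cpsi (sq n ++ scl (-1) (sq' n)))).
    apply: (lim_ext _ (lim_lin (-1) l1' l1)) => n.
    by rewrite cpsi_cat cpsi_scl addrC.
  move=> n; have -> : (-1) *: p' + p = (u - p') - (u - p).
    rewrite scaleN1r.
    by rewrite opprB [RHS]addrC [RHS]addrA subrK addrC.
  by rewrite ipBr o1 o1' subrr.
rewrite scaleN1r in pp.
have ep : p' = p by apply/eqP; rewrite eq_sym -subr_eq0 addrC pp.
rewrite ep in l1'.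
apply: lim_unique l2 _.
apply: lim_transfer l1' l1 l2' _ => n.
by rewrite nrmB (nrmB (cpsi (sq n))); exact: lip.
Qed.

Definition G (u : HLs) : HKs := proj1_sig (constructive_indefinite_description _ (Gex u)).
Lemma GP u : Grel u (G u).
Proof. exact: proj2_sig (constructive_indefinite_description _ (Gex u)). Qed.

Lemma G_lin (a : R[i]) u w : G (a *: u + w) = a *: G u + G w.
Proof.
apply: Guniq (GP _) _.
have [p [sq [l1 o1 l2]]] := GP u.
have [p' [sq' [l1' o1' l2']]] := GP w.
exists (a *: p + p'), (fun n => scl a (sq n) ++ sq' n); split.
- by apply: (lim_ext _ (lim_lin a l1 l1')) => n; rewrite cpsi_cat cpsi_scl.
- move=> s; have -> : a *: u + w - (a *: p + p') = a *: (u - p) + (w - p').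
    by rewrite scalerBr opprD addrACA.
  by rewrite ipDr ipZr o1 o1' mulr0 addr0.
- by apply: (lim_ext _ (lim_lin a l2 l2')) => n; rewrite cphi_cat cphi_scl.
Qed.

Lemma G_psi x : G (psi x) = phi x.
Proof.
apply: Guniq (GP _) _.
exists (psi x), (fun _ => [:: (1, x)]); split.
- by apply: (lim_ext _ (lim_const (psi x))) => n; rewrite /cpsi big_seq1 scale1r.
- by move=> s; rewrite subrr ip0r.
- by apply: (lim_ext _ (lim_const (phi x))) => n; rewrite /cphi big_seq1 scale1r.
Qed.

Lemma G_bd u : hnorm (G u) <= hnorm u.
Proof.
have [p [sq [l1 o1 l2]]] := GP u.
have op : ipL p (u - p) = 0 by apply: lim_ip0 l1 _ => n; exact: o1.
have hp : hnorm p <= hnorm u.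
  apply: le_n2; have := n2D p (u - p); rewrite addrC subrK => ->.
  rewrite op hinner_conj op conjc0 /= addr0 addr0 lerDl; exact: n2_ge0.
apply: le_trans _ hp; apply: small_le => e e0.
have e2 : 0 < e / 2 by rewrite divr_gt0.
have [N1 h1] := l1 _ e2; have [N2 h2] := l2 _ e2.
set n := maxn N1 N2.
have := h1 n (leq_maxl _ _); have := h2 n (leq_maxr _ _).
have := nrm_key (sq n).
have := nrm_tri (G u) (cphi (sq n)) 0; rewrite !subr0 (nrmB (G u)).
have := nrm_tri (cpsi (sq n)) p 0; rewrite !subr0.
set A := hnorm (cphi _); set B := hnorm (cpsi _); set C := hnorm (cphi _ - _).
set D := hnorm (cpsi _ - _); lra.
Qed.

Lemma Aex v : exists w : HLs, forall u, ipK (G v) (G u) = ipL w u.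
Proof.
apply: (@riesz R HLs (fun u => ipK (G v) (G u)) _ (hnorm (G v))) => [a u w|u].
  by rewrite G_lin ipDr ipZr.
by apply: le_trans (CS _ _) _; rewrite ler_wpM2l ?nrm_ge0 // G_bd.
Qed.

Definition A (v : HLs) : HLs := proj1_sig (constructive_indefinite_description _ (Aex v)).
Lemma AP v u : ipK (G v) (G u) = ipL (A v) u.
Proof. exact: proj2_sig (constructive_indefinite_description _ (Aex v)) u. Qed.

Lemma ipA u v : ipL u (A v) = ipK (G u) (G v).
Proof. by rewrite hinner_conj -AP -hinner_conj. Qed.

Lemma ip_ext (w w' : HLs) : (forall x, ipL w x = ipL w' x) -> w = w'.
Proof.
move=> h; apply/eqP; rewrite -subr_eq0; apply/eqP; apply: hinner_eq0.
by rewrite ipBl h subrr.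
Qed.

Lemma A_lin : linH A.
Proof.
move=> a u w; apply: ip_ext => x.
by rewrite -AP G_lin ipDl ipZl !AP ipDl ipZl.
Qed.

Lemma A_sa u v : ipL (A u) v = ipL u (A v).
Proof. by rewrite -AP ipA. Qed.

Lemma A_bdG v : hnorm (A v) <= hnorm (G v).
Proof.
have h : n2 (A v) <= hnorm (A v) * hnorm (G v).
  rewrite /n2 -AP; apply: le_trans (CS_re _ _) _.
  by rewrite mulrC ler_wpM2r ?nrm_ge0 // G_bd.
rewrite -nrm_sq expr2 in h.
have := nrm_ge0 (A v); have := nrm_ge0 (G v); nra.
Qed.

Lemma A_bd v : hnorm (A v) <= hnorm v.
Proof. exact: le_trans (A_bdG v) (G_bd v). Qed.

Definition Sop (v : HLs) := v - A v.
Lemma S_lin : linH Sop.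
Proof. by move=> a u w; rewrite /Sop A_lin scalerBr opprD addrACA. Qed.
Lemma S_sa u v : ipL (Sop u) v = ipL u (Sop v).
Proof. by rewrite /Sop ipBl ipBr A_sa. Qed.
Lemma S_bd v : hnorm (Sop v) <= hnorm v.
Proof.
apply: le_n2; rewrite /Sop n2D /n2 !(ipNl, ipNr) opprK (ipA v v) -(AP v v).
have := n2_lex (A_bdG v); rewrite /n2 => h.
rewrite !raddfN /=; have := n2_ge0 (G v); rewrite /n2; lra.
Qed.

Lemma forward : exists B : HLs -> HLs,
    [/\ bounded_op B, selfadjoint_op B, positive_op B, op_le B id &
      exists C : HLs -> HLs, pos_sqrt_of B C /\
        forall x y, K x y = ipK (phi x) (phi y) /\
                    ipK (phi x) (phi y) = ipL (C (psi x)) (C (psi y))].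
Proof.
have [C [Cb Csa Cpos CC]] := sqrt_op S_lin S_sa S_bd.
have CCA : forall v, C (C v) = A v by move=> v; rewrite CC /Sop opprB addrC subrK.
exists A; split.
- split; first exact: A_lin.
  by exists 1 => v; rewrite mul1r A_bd.
- exact: A_sa.
- by move=> v; rewrite ipA; exact: hinner_ge0.
- move=> v; rewrite ipA /= !ip_real lecR; apply: n2_lex; exact: G_bd.
- exists C; split; first by split => //; split => //; split.
  move=> x y; split; first exact: Hphi.
  by rewrite Csa CCA ipA !G_psi.
Qed.

End Kernel.

Lemma backward (R : realType) (X : Type) (K L : X -> X -> R[i]) (HKs HLs : hilbert R)
  (phi : X -> HKs) (psi : X -> HLs)
  (Hpsi : forall x y, L x y = hinner HLs (psi x) (psi y))
  (B C : HLs -> HLs) (Bb : bounded_op B) (Ble : op_le B id) (hC : pos_sqrt_of B C)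
  (hK : forall x y, K x y = hinner HKs (phi x) (phi y) /\
                    hinner HKs (phi x) (phi y) = hinner HLs (C (psi x)) (C (psi y))) :
  kernel_le K L.
Proof.
move=> n x c.
have [Blin _] := Bb.
have [_ [Csa [_ CCB]]] := hC.
pose D := fun v : HLs => v - B v.
have Dlin : linH D by move=> a u w; rewrite /D Blin scalerBr opprD addrACA.
pose w := \sum_(j < n) c j *: psi (x j).
have e : \sum_(i < n) \sum_(j < n) (Num.conj (c i) * c j * (L (x i) (x j) - K (x i) (x j)))
   = hinner HLs w (D w).
  have -> : D w = \sum_(j < n) c j *: D (psi (x j)).
    by rewrite /w lin_sum //; apply: eq_bigr => j _; rewrite linZ.
  rewrite ip_comb; apply: eq_bigr => i _; apply: eq_bigr => j _.
  have [-> ->] := hK (x i) (x j).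
  by rewrite Hpsi numconjE Csa CCB /D ipBr.
rewrite e /D ipBr subr_ge0; exact: Ble.
Qed.

Unset Implicit Arguments.

Theorem theorem5p7 (R : realType) (X : Type) (K L : X -> X -> R[i])
  (HK : pd_kernel K) (HL : pd_kernel L)
  (HKs HLs : hilbert R) (phi : X -> HKs) (psi : X -> HLs)
  (Hphi : forall x y, K x y = hinner HKs (phi x) (phi y))
  (Hpsi : forall x y, L x y = hinner HLs (psi x) (psi y)) :
  kernel_le K L <->
  exists B : HLs -> HLs,
    [/\ bounded_op B, selfadjoint_op B, positive_op B, op_le B id &
      exists C : HLs -> HLs, pos_sqrt_of B C /\
        forall x y, K x y = hinner HKs (phi x) (phi y) /\
                    hinner HKs (phi x) (phi y) = hinner HLs (C (psi x)) (C (psi y))].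

Proof.
split.
- move=> kle; exact: (forward Hphi Hpsi kle).
- case=> B [Bb Bsa Bpos Ble [C [hC hK]]].
  exact: (backward Hpsi Bb Ble hC hK).
Qed.
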